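(* Let $F_2=\langle x,y\rangle$ be the free group of rank $2$, and for $i=1,2,\ldots$ let $$a_i(x,y)=y^{(x y^i)^{2} x^{-1}}\, y^{-x}\in F_2 .$$ Let $\bar F=\langle a_i(x,y)\mid i=1,2,\ldots\rangle\le F_2$. For any subgroup $N$ of $\bar F$, let $\bar N$ be the normal closure of $N$ in $\bar F$ and $\tilde N$ the normal closure of $N$ in $F_2$. Then $\bar F\cap\tilde N=\bar N$.
   Context: Notation: $u^v=v^{-1}uv$ and $u^{-v}=(u^{-1})^v$. *)

(* Defs.v *)
From mathcomp Require Import all_boot.
Set Implicit Arguments. Unset Strict Implicit. Unset Printing Implicit Defensive.

(* A letter (g, e): g = false means x, g = true means y; e = true means inverse. *)
Definition letter := (bool * bool)%type.
Definition word := seq letter.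

Definition inv_letter (l : letter) : letter := (l.1, ~~ l.2).
Definition cancels (a b : letter) : bool := (a.1 == b.1) && (a.2 != b.2).

Fixpoint reducedb (w : word) : bool :=
  match w with
  | a :: ((b :: _) as t) => ~~ cancels a b && reducedb t
  | _ => true
  end.

Definition push (l : letter) (w : word) : word :=
  match w with
  | b :: t => if cancels l b then t else l :: w
  | [::] => [:: l]
  end.
Definition reduce (w : word) : word := foldr push [::] w.

Lemma reducedb_tail a t : reducedb (a :: t) -> reducedb t.
Proof. by case: t => //= b t /andP[]. Qed.

Lemma push_reduced l w : reducedb w -> reducedb (push l w).
Proof.
case: w => [|b t] // H; rewrite /push.
case: ifP => Hc; first exact: (reducedb_tail H).
by move: H; rewrite /= Hc.
Qed.

Lemma reduce_reduced w : reducedb (reduce w).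
Proof. by elim: w => //= l w IH; apply: push_reduced. Qed.

Definition F2 := {w : word | reducedb w}.

Definition one : F2 := exist _ [::] isT.
Definition mul (u v : F2) : F2 :=
  exist _ (reduce (sval u ++ sval v)) (reduce_reduced _).
Definition inv (u : F2) : F2 :=
  exist _ (reduce (rev (map inv_letter (sval u)))) (reduce_reduced _).
Definition xgen : F2 := exist _ [:: (false, false)] isT.
Definition ygen : F2 := exist _ [:: (true, false)] isT.

(* u ^ v = v^-1 u v *)
Definition conj (u v : F2) : F2 := mul (inv v) (mul u v).
Definition pow (u : F2) (n : nat) : F2 := iter n (mul u) one.

Definition a_elt (i : nat) : F2 :=
  mul (conj ygen (mul (pow (mul xgen (pow ygen i)) 2) (inv xgen)))
      (conj (inv ygen) xgen).

Definition subgroup (H : F2 -> Prop) : Prop :=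
  [/\ H one, (forall u v, H u -> H v -> H (mul u v)) & (forall u, H u -> H (inv u))].

Definition gen (S : F2 -> Prop) (g : F2) : Prop :=
  forall H, subgroup H -> (forall s, S s -> H s) -> H g.

Definition Fbar : F2 -> Prop := gen (fun g => exists i, 0 < i /\ g = a_elt i).

Definition ncl (K N : F2 -> Prop) (g : F2) : Prop :=
  forall H, subgroup H -> (forall h, H h -> K h) -> (forall n, N n -> H n) ->
    (forall k h, K k -> H h -> H (conj h k)) -> H g.

Definition F2all : F2 -> Prop := fun _ => True.

(* Main.v *)
Require Import Defs.
From Stdlib Require Import ZArith Lia FunctionalExtensionality PropExtensionality.
From mathcomp Require Import all_boot.
From mathcomp Require Import zify_ssreflect.
Require Import Defs.
Set Implicit Arguments. Unset Strict Implicit. Unset Printing Implicit Defensive.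

Lemma inv_letterK l : inv_letter (inv_letter l) = l.
Proof. by case: l => a b; rewrite /inv_letter /= negbK. Qed.

Lemma cancels_inv a b : cancels a b -> b = inv_letter a.
Proof. by case: a b => [[] []] [[] []]. Qed.

Lemma cancels_inv_letter a : cancels a (inv_letter a).
Proof. by case: a => [[] []]. Qed.

Lemma cancels_invl a : cancels (inv_letter a) a.
Proof. by case: a => [[] []]. Qed.

Lemma reduced_cons2 a b t : reducedb [:: a, b & t] = ~~ cancels a b && reducedb (b :: t).
Proof. by []. Qed.

Lemma push_invK l w : reducedb w -> push (inv_letter l) (push l w) = w.
Proof.
case: w => [|b t]; first by rewrite /push cancels_invl.
move=> Hr; rewrite {2}/push; case: ifP => Hc.
  move: Hr; rewrite (cancels_inv Hc).
  case: t => [|c t] //.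
  by rewrite reduced_cons2 => /andP[Hbc _]; rewrite /push (negbTE Hbc).
by rewrite /push cancels_invl.
Qed.

Lemma push_invK' l w : reducedb w -> push l (push (inv_letter l) w) = w.
Proof. by move=> H; rewrite -{1}(inv_letterK l) push_invK. Qed.

Lemma foldr_push_red r w : reducedb r -> reducedb (foldr push r w).
Proof. by move=> H; elim: w => //= l w IH; apply: push_reduced. Qed.

Lemma foldr_push_push r l w : reducedb r ->
  foldr push r (push l w) = push l (foldr push r w).
Proof.
move=> Hr; case: w => [|b t] //=.
case: ifP => Hc //.
by rewrite (cancels_inv Hc) push_invK' //; apply: foldr_push_red.
Qed.

Lemma foldr_reduce r w : reducedb r -> foldr push r (reduce w) = foldr push r w.
Proof.
move=> Hr; elim: w => //= l w IH.
by rewrite foldr_push_push // IH.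
Qed.

Lemma reduce_id w : reducedb w -> reduce w = w.
Proof.
elim: w => //= a t IH Hr.
rewrite IH; last exact: reducedb_tail Hr.
case: t Hr {IH} => [|b t] //= /andP[Hab _].
by rewrite (negbTE Hab).
Qed.

Lemma reduce_cat u v : reduce (u ++ v) = foldr push (reduce v) u.
Proof. by rewrite /reduce foldr_cat. Qed.

Lemma F2_eq (u v : F2) : sval u = sval v -> u = v.
Proof.
case: u v => [u Hu] [v Hv] /= E; subst v.
by rewrite (eq_irrelevance Hu Hv).
Qed.

Lemma mulA u v w : mul (mul u v) w = mul u (mul v w).
Proof.
apply: F2_eq => /=.
rewrite reduce_cat foldr_reduce ?reduce_reduced // foldr_cat.
by rewrite [RHS]reduce_cat (reduce_id (reduce_reduced _)) reduce_cat.
Qed.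

Lemma mul1g u : mul one u = u.
Proof. by apply: F2_eq => /=; rewrite reduce_id //; case: u. Qed.

Lemma mulg1 u : mul u one = u.
Proof. by apply: F2_eq => /=; rewrite cats0 reduce_id //; case: u. Qed.

Lemma foldr_rcons' (f : letter -> word -> word) z s a :
  foldr f z (rcons s a) = foldr f (f a z) s.
Proof. by rewrite -cats1 foldr_cat. Qed.

Lemma L1 u w : reducedb w ->
  foldr push (foldr push w u) (rev (map inv_letter u)) = w.
Proof.
elim: u w => //= l t IH w Hw.
rewrite rev_cons foldr_rcons' push_invK ?IH //.
exact: foldr_push_red.
Qed.

Lemma L2 u w : reducedb w ->
  foldr push (foldr push w (rev (map inv_letter u))) u = w.
Proof.
elim: u w => //= l t IH w Hw.
rewrite rev_cons foldr_rcons' IH ?push_invK' //.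
exact: push_reduced.
Qed.

Lemma mulVg u : mul (inv u) u = one.
Proof.
apply: F2_eq => /=; case: u => u Hu /=.
rewrite reduce_cat foldr_reduce reduce_id //.
by rewrite -{1}(reduce_id Hu) L1.
Qed.

Lemma mulgV u : mul u (inv u) = one.
Proof.
apply: F2_eq => /=; case: u => u Hu /=.
by rewrite reduce_cat reduce_id ?reduce_reduced // L2.
Qed.

Lemma mulKg u v : mul (inv u) (mul u v) = v.
Proof. by rewrite -mulA mulVg mul1g. Qed.
Lemma mulKVg u v : mul u (mul (inv u) v) = v.
Proof. by rewrite -mulA mulgV mul1g. Qed.
Lemma mulgK u v : mul (mul v u) (inv u) = v.
Proof. by rewrite mulA mulgV mulg1. Qed.
Lemma mulgKV u v : mul (mul v (inv u)) u = v.
Proof. by rewrite mulA mulVg mulg1. Qed.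

Lemma inv_uniq u v : mul u v = one -> v = inv u.
Proof. by move=> E; rewrite -(mulKg u v) E mulg1. Qed.

Lemma invK u : inv (inv u) = u.
Proof. by symmetry; apply: inv_uniq; rewrite mulVg. Qed.

Lemma inv1 : inv one = one.
Proof. by symmetry; apply: inv_uniq; rewrite mulg1. Qed.

Lemma inv_mul u v : inv (mul u v) = mul (inv v) (inv u).
Proof.
symmetry; apply: inv_uniq.
by rewrite mulA mulKVg mulgV.
Qed.

Definition lN := (nat * bool)%type.
Definition cancN (a b : lN) : bool := (a.1 == b.1) && (a.2 != b.2).
Fixpoint redN (w : seq lN) : bool :=
  match w with
  | a :: ((b :: _) as t) => ~~ cancN a b && redN t
  | _ => true
  end.
Definition pushN (l : lN) (w : seq lN) : seq lN :=
  match w with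
  | b :: t => if cancN l b then t else l :: w
  | [::] => [:: l]
  end.

Lemma redN_tail a t : redN (a :: t) -> redN t.
Proof. by case: t => //= b t /andP[]. Qed.

Lemma pushN_red l w : redN w -> redN (pushN l w).
Proof.
case: w => [|b t] // H; rewrite /pushN.
case: ifP => Hc; first exact: (redN_tail H).
by move: H; rewrite /= Hc.
Qed.

Lemma cancN_inv (a b : lN) : cancN a b -> b = (a.1, ~~ a.2).
Proof.
case: a b => [k e] [k' e']; rewrite /cancN /= => /andP[/eqP -> H].
by case: e e' H => [] [].
Qed.

Lemma cancN_invl (a : lN) : cancN (a.1, ~~ a.2) a.
Proof. by case: a => k [] ; rewrite /cancN /= eqxx. Qed.

Lemma pushNK l w : redN w -> pushN (l.1, ~~ l.2) (pushN l w) = w.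
Proof.
case: w => [|b t]; first by rewrite /pushN cancN_invl.
move=> Hr; rewrite {2}/pushN; case: ifP => Hc.
  move: Hr; rewrite (cancN_inv Hc).
  case: t => [|c t] //= /andP[Hbc _].
  by rewrite (negbTE Hbc).
by rewrite /pushN cancN_invl.
Qed.

Definition PN := {w : seq lN | redN w}.
Definition pushP (l : lN) (p : PN) : PN :=
  exist _ (pushN l (sval p)) (pushN_red l (proj2_sig p)).

Lemma PN_eq (u v : PN) : sval u = sval v -> u = v.
Proof.
case: u v => [u Hu] [v Hv] /= E; subst v.
by rewrite (eq_irrelevance Hu Hv).
Qed.

Lemma pushP_tf k p : pushP (k, true) (pushP (k, false) p) = p.
Proof. apply: PN_eq => /=; exact: (pushNK (k, false) (proj2_sig p)). Qed.
Lemma pushP_ft k p : pushP (k, false) (pushP (k, true) p) = p.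
Proof. apply: PN_eq => /=; exact: (pushNK (k, true) (proj2_sig p)). Qed.

Record Rst := MkR { rc : F2 -> Prop; rs : Z; rp : PN }.
Definition Om := (Z * Rst)%type.

Definition R (q : F2) (C : F2 -> Prop) : F2 -> Prop := fun z => C (mul z (inv q)).

Definition fv (w : seq lN) : F2 :=
  match w with
  | [::] => one
  | b :: t => let l := last b t in if l.2 && (0 < l.1)%N then a_elt l.1 else one
  end.
Definition fval (s : Z) (p : PN) : F2 := if (s =? 0)%Z then fv (sval p) else one.

Definition setC (C : F2 -> Prop) (r : Rst) := MkR C (rs r) (rp r).
Definition Sf r := setC (R (fval (rs r) (rp r)) (rc r)) r.
Definition Sb r := setC (R (inv (fval (rs r) (rp r))) (rc r)) r.
Definition R0f r := MkR (rc r) (rs r + 1)%Z (rp r).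
Definition R0b r := MkR (rc r) (rs r - 1)%Z (rp r).
Definition g1 (s : Z) (p : PN) : PN :=
  if (2 <=? s)%Z then pushP (Z.to_nat s - 1, true) (pushP (Z.to_nat s, false) p)
  else if (s =? 1)%Z then pushP (1%N, false) p else p.
Definition g1b (s : Z) (p : PN) : PN :=
  if (1 <=? s)%Z then pushP (Z.to_nat s + 1, true) (pushP (Z.to_nat s, false) p)
  else if (s =? 0)%Z then pushP (1%N, true) p else p.
Definition R1f r := MkR (rc r) (rs r - 1)%Z (g1 (rs r) (rp r)).
Definition R1b r := MkR (rc r) (rs r + 1)%Z (g1b (rs r) (rp r)).

Definition Bf (m : Z) (r : Rst) : Rst :=
  if (m =? -1)%Z then Sf r else if (m =? 0)%Z then R0f r
  else if (0 <? m)%Z then (if Z.odd m then R1f r else R1b r) else r.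
Definition Bb (m : Z) (r : Rst) : Rst :=
  if (m =? -1)%Z then Sb r else if (m =? 0)%Z then R0b r
  else if (0 <? m)%Z then (if Z.odd m then R1b r else R1f r) else r.

Lemma RK q C : R (inv q) (R q C) = C.
Proof. by apply: functional_extensionality => z; rewrite /R invK mulgK. Qed.
Lemma RKV q C : R q (R (inv q) C) = C.
Proof. by apply: functional_extensionality => z; rewrite /R invK mulgKV. Qed.
Lemma R1 C : R one C = C.
Proof. by apply: functional_extensionality => z; rewrite /R inv1 mulg1. Qed.
Lemma RM u v C : R v (R u C) = R (mul u v) C.
Proof. by apply: functional_extensionality => z; rewrite /R inv_mul mulA. Qed.

Lemma g1K s p : g1b (s - 1) (g1 s p) = p.
Proof.
rewrite /g1 /g1b.
case: (Z.leb_spec 2 s) => H2.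
  have -> : (1 <=? s - 1)%Z = true by apply/Z.leb_le; lia.
  have -> : Z.to_nat (s - 1) = (Z.to_nat s - 1)%N by lia.
  have -> : (Z.to_nat s - 1 + 1)%N = Z.to_nat s by lia.
  by rewrite pushP_ft pushP_tf.
have -> : (1 <=? s - 1)%Z = false by apply/Z.leb_gt; lia.
case: (Z.eqb_spec s 1) => H1.
  by subst s; rewrite /= pushP_tf.
by have -> : (s - 1 =? 0)%Z = false by apply/Z.eqb_neq; lia.
Qed.

Lemma g1Kb s p : g1 (s + 1) (g1b s p) = p.
Proof.
rewrite /g1 /g1b.
case: (Z.leb_spec 1 s) => H1.
  have -> : (2 <=? s + 1)%Z = true by apply/Z.leb_le; lia.
  have -> : Z.to_nat (s + 1) = (Z.to_nat s + 1)%N by lia.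
  have -> : (Z.to_nat s + 1 - 1)%N = Z.to_nat s by lia.
  by rewrite pushP_ft pushP_tf.
have -> : (2 <=? s + 1)%Z = false by apply/Z.leb_gt; lia.
case: (Z.eqb_spec s 0) => H0.
  by subst s; rewrite /= pushP_ft.
by have -> : (s + 1 =? 1)%Z = false by apply/Z.eqb_neq; lia.
Qed.

Lemma Rst_eq (r : Rst) : MkR (rc r) (rs r) (rp r) = r.
Proof. by case: r. Qed.

Lemma BfK m r : Bb m (Bf m r) = r.
Proof.
case: r => C s p.
rewrite /Bf /Bb.
case: (Z.eqb_spec m (-1)) => _.
  by rewrite /Sf /Sb /setC /= RK.
case: (Z.eqb_spec m 0) => _.
  by rewrite /R0f /R0b /= ?Z.sub_add ?Z.add_simpl_r.
case: (Z.ltb_spec 0 m) => _ //.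
case: (Z.odd m).
  by rewrite /R1f /R1b /= ?Z.sub_add ?Z.add_simpl_r g1K.
by rewrite /R1f /R1b /= ?Z.sub_add ?Z.add_simpl_r g1Kb.
Qed.

Lemma BbK m r : Bf m (Bb m r) = r.
Proof.
case: r => C s p.
rewrite /Bf /Bb.
case: (Z.eqb_spec m (-1)) => _.
  by rewrite /Sf /Sb /setC /= RKV.
case: (Z.eqb_spec m 0) => _.
  by rewrite /R0f /R0b /= ?Z.sub_add ?Z.add_simpl_r.
case: (Z.ltb_spec 0 m) => _ //.
case: (Z.odd m).
  by rewrite /R1f /R1b /= ?Z.sub_add ?Z.add_simpl_r g1Kb.
by rewrite /R1f /R1b /= ?Z.sub_add ?Z.add_simpl_r g1K.
Qed.

Definition act_letter (l : letter) (o : Om) : Om :=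
  let (n, r) := o in
  match l with
  | (false, false) => ((n + 1)%Z, r)
  | (false, true) => ((n - 1)%Z, r)
  | (true, false) => (n, Bf n r)
  | (true, true) => (n, Bb n r)
  end.

Lemma act_letterK l o : act_letter (inv_letter l) (act_letter l o) = o.
Proof.
case: o => n r; case: l => [[] []] /=; rewrite ?BfK ?BbK //;
  by congr pair; lia.
Qed.

Fixpoint actw (w : word) (o : Om) : Om :=
  match w with [::] => o | l :: t => actw t (act_letter l o) end.

Lemma actw_cat u v o : actw (u ++ v) o = actw v (actw u o).
Proof. by elim: u o => //= l u IH o. Qed.

Lemma actw_push l w o : actw (push l w) o = actw (l :: w) o.
Proof.
case: w => [|b t] //=; case: ifP => Hc //=.
by rewrite (cancels_inv Hc) act_letterK.
Qed.

Lemma actw_reduce w o : actw (reduce w) o = actw w o.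
Proof. by elim: w o => //= l w IH o; rewrite actw_push /= IH. Qed.

Definition act (g : F2) (o : Om) : Om := actw (sval g) o.

Lemma act_mul u v o : act (mul u v) o = act v (act u o).
Proof. by rewrite /act /= actw_reduce actw_cat. Qed.
Lemma act_one o : act one o = o.
Proof. by []. Qed.
Lemma act_invK u o : act (inv u) (act u o) = o.
Proof. by rewrite -act_mul mulgV. Qed.
Lemma act_Kinv u o : act u (act (inv u) o) = o.
Proof. by rewrite -act_mul mulVg. Qed.
Lemma act_pow u k o : act (pow u k) o = iter k (act u) o.
Proof.
elim: k o => //= k IH o.
by rewrite act_mul IH -iterSr.
Qed.
Lemma act_conj u v o : act (conj u v) o = act v (act u (act (inv v) o)).
Proof. by rewrite /conj !act_mul. Qed.

Lemma act_x n r : act xgen (n, r) = ((n + 1)%Z, r). Proof. by []. Qed.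
Lemma act_xi n r : act (inv xgen) (n, r) = ((n - 1)%Z, r). Proof. by []. Qed.
Lemma act_y n r : act ygen (n, r) = (n, Bf n r). Proof. by []. Qed.
Lemma act_yi n r : act (inv ygen) (n, r) = (n, Bb n r). Proof. by []. Qed.

Lemma iter_y k n r : iter k (act ygen) (n, r) = (n, iter k (Bf n) r).
Proof. by elim: k => //= k ->. Qed.

Lemma iterK (T : Type) (f g : T -> T) k x : (forall y, g (f y) = y) -> iter k g (iter k f x) = x.
Proof.
move=> H; elim: k x => //= k IH x.
by rewrite -[f (iter k f x)]/(iter k.+1 f x) iterSr IH H.
Qed.

Definition Vw (i : nat) := mul (pow (mul xgen (pow ygen i)) 2) (inv xgen).

Lemma act_V i m r : act (Vw i) (m, r) = ((m + 1)%Z, iter i (Bf (m + 2)) (iter i (Bf (m + 1)) r)).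
Proof.
rewrite /Vw act_mul act_pow /= !act_mul !act_pow act_x iter_y act_x iter_y act_xi.
have -> : (m + 1 + 1 - 1 = m + 1)%Z by lia.
by have -> : (m + 1 + 1 = m + 2)%Z by lia.
Qed.

Lemma act_Vinv i n r : act (inv (Vw i)) (n, r) =
  ((n - 1)%Z, iter i (Bb n) (iter i (Bb (n + 1)) r)).
Proof.
rewrite -[in LHS](_ : act (Vw i) ((n - 1)%Z, iter i (Bb n) (iter i (Bb (n + 1)) r)) = (n, r)).
  by rewrite act_invK.
rewrite act_V.
have -> : (n - 1 + 1 = n)%Z by lia.
have -> : (n - 1 + 2 = n + 1)%Z by lia.
by rewrite (@iterK _ (Bb n) (Bf n)) ?(@iterK _ (Bb (n+1)) (Bf (n+1))) // => y; rewrite BbK.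
Qed.

Definition chain i n r :=
  Bb (n - 1) (iter i (Bf (n + 1)) (iter i (Bf n) (Bf (n - 1)
     (iter i (Bb n) (iter i (Bb (n + 1)) r))))).

Lemma act_a i n r : act (a_elt i) (n, r) = (n, chain i n r).
Proof.
rewrite /a_elt act_mul !act_conj -/(Vw i) act_Vinv act_y act_V act_xi act_yi act_x.
have -> : (n - 1 + 1 = n)%Z by lia.
have -> : (n - 1 + 2 = n + 1)%Z by lia.
have -> : (n - 1 + 1 = n)%Z by lia.
by [].
Qed.

Lemma Bf1 y : Bf 1 y = R1f y. Proof. by []. Qed.
Lemma Bb1 y : Bb 1 y = R1b y. Proof. by []. Qed.
Lemma Bf0 y : Bf 0 y = R0f y. Proof. by []. Qed.
Lemma Bb0 y : Bb 0 y = R0b y. Proof. by []. Qed.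
Lemma Bfm1 y : Bf (-1) y = Sf y. Proof. by []. Qed.
Lemma Bbm1 y : Bb (-1) y = Sb y. Proof. by []. Qed.

Lemma Bf_pos n y : (1 <= n)%Z -> Bf (n + 1) y = Bb n y.
Proof.
move=> H; rewrite /Bf /Bb.
have -> : (n + 1 =? -1)%Z = false by apply/Z.eqb_neq; lia.
have -> : (n + 1 =? 0)%Z = false by apply/Z.eqb_neq; lia.
have -> : (n =? -1)%Z = false by apply/Z.eqb_neq; lia.
have -> : (n =? 0)%Z = false by apply/Z.eqb_neq; lia.
have -> : (0 <? n + 1)%Z = true by apply/Z.ltb_lt; lia.
have -> : (0 <? n)%Z = true by apply/Z.ltb_lt; lia.
by rewrite Z.add_1_r Z.odd_succ -Z.negb_odd; case: (Z.odd n).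
Qed.

Lemma Bb_pos n y : (1 <= n)%Z -> Bb (n + 1) y = Bf n y.
Proof.
move=> H; rewrite /Bf /Bb.
have -> : (n + 1 =? -1)%Z = false by apply/Z.eqb_neq; lia.
have -> : (n + 1 =? 0)%Z = false by apply/Z.eqb_neq; lia.
have -> : (n =? -1)%Z = false by apply/Z.eqb_neq; lia.
have -> : (n =? 0)%Z = false by apply/Z.eqb_neq; lia.
have -> : (0 <? n + 1)%Z = true by apply/Z.ltb_lt; lia.
have -> : (0 <? n)%Z = true by apply/Z.ltb_lt; lia.
by rewrite Z.add_1_r Z.odd_succ -Z.negb_odd; case: (Z.odd n).
Qed.

Lemma Bf_neg n y : (n <= -2)%Z -> Bf n y = y.
Proof.
move=> H; rewrite /Bf.
have -> : (n =? -1)%Z = false by apply/Z.eqb_neq; lia.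
have -> : (n =? 0)%Z = false by apply/Z.eqb_neq; lia.
by have -> : (0 <? n)%Z = false by apply/Z.ltb_ge; lia.
Qed.

Lemma Bb_neg n y : (n <= -2)%Z -> Bb n y = y.
Proof.
move=> H; rewrite /Bb.
have -> : (n =? -1)%Z = false by apply/Z.eqb_neq; lia.
have -> : (n =? 0)%Z = false by apply/Z.eqb_neq; lia.
by have -> : (0 <? n)%Z = false by apply/Z.ltb_ge; lia.
Qed.

Lemma iter_setC (f : Rst -> Rst) k C y :
  (forall C y, f (setC C y) = setC C (f y)) -> iter k f (setC C y) = setC C (iter k f y).
Proof. by move=> H; elim: k => //= k ->; rewrite H. Qed.

Lemma rc_iter (f : Rst -> Rst) k y : (forall y, rc (f y) = rc y) -> rc (iter k f y) = rc y.
Proof. by move=> H; elim: k => //= k <-; rewrite H. Qed.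

Lemma rs_iter_R1b k y : rs (iter k R1b y) = (rs y + Z.of_nat k)%Z.
Proof. elim: k => /= [|k ->]; lia. Qed.
Lemma rs_iter_R0b k y : rs (iter k R0b y) = (rs y - Z.of_nat k)%Z.
Proof. elim: k => /= [|k ->]; lia. Qed.
Lemma rp_iter_R0b k y : rp (iter k R0b y) = rp y.
Proof. by elim: k => //= k ->. Qed.

Lemma iter_R1b0 k r : rs r = 0%Z ->
  iter k.+1 R1b r = MkR (rc r) (Z.of_nat k.+1) (pushP (k.+1, true) (rp r)).
Proof.
move=> H0; elim: k => [|k IH].
  by rewrite /= /R1b /g1b H0.
rewrite iterS IH /R1b /g1b; cbn [rs rp rc].
have -> : (1 <=? Z.of_nat k.+1)%Z = true by apply/Z.leb_le; lia.
rewrite Nat2Z.id pushP_ft.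
congr MkR; first lia.
by rewrite addn1.
Qed.

Lemma fv_push i w : w != [::] -> fv (pushN (i, true) w) = fv w.
Proof.
case: w => [|b t] // _; rewrite /pushN.
case: ifP => Hc //.
rewrite (cancN_inv Hc) /=.
by case: t.
Qed.

Lemma setC_id r : setC (rc r) r = r.
Proof. by case: r. Qed.

Definition basecond (n : Z) (r : Rst) : bool :=
  [&& (n =? 0)%Z, (rs r =? 0)%Z & nilp (sval (rp r))].

Lemma chain_val i n r : (0 < i)%N ->
  chain i n r = if basecond n r then setC (R (a_elt i) (rc r)) r else r.
Proof.
move=> Hi; rewrite /chain /basecond.
case: (Z.ltb_spec 0 n) => Hn.
  have -> : (n =? 0)%Z = false by apply/Z.eqb_neq; lia.
  rewrite (eq_iter (fun y => Bf_pos y (_ : (1 <= n)%Z)) i) ?(eq_iter (fun y => Bb_pos y (_ : (1 <= n)%Z)) i); try lia.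
  rewrite (@iterK _ (Bf n) (Bb n) _ r) ?(@iterK _ (Bf n) (Bb n)); try by move=> y; rewrite BfK.
  by rewrite BfK.
case: (Z.eqb_spec n 0) => Hn0; last first.
  rewrite /= Bb_neg ?Bf_neg; try lia.
  by rewrite (@iterK _ (Bb n) (Bf n)) ?(@iterK _ (Bb (n+1)) (Bf (n+1))) // => y; rewrite BbK.
subst n => /=.
rewrite (eq_iter Bf1) (eq_iter Bb1) (eq_iter Bf0) (eq_iter Bb0) Bfm1 Bbm1.
set r1 := iter i R1b r.
set r2 := iter i R0b r1.
rewrite /Sf iter_setC // iter_setC //.
rewrite (@iterK _ R0b R0f); last by move=> y; have := BbK 0 y.
rewrite /r1 (@iterK _ R1b R1f); last by move=> y; have := BbK 1 y.
rewrite /Sb /setC /=.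
have Hrc : rc r2 = rc r by rewrite /r2 /r1 rc_iter // rc_iter.
have Hrs : rs r2 = rs r by rewrite /r2 rs_iter_R0b rs_iter_R1b; lia.
rewrite Hrc Hrs.
case: (Z.eqb_spec (rs r) 0) => Hs /=; last first.
  by rewrite /fval; move/Z.eqb_neq: Hs => ->; rewrite RK Rst_eq.
rewrite /fval Hs /= /r2 rp_iter_R0b /r1.
case: i Hi {r1 r2 Hrc Hrs} => // k _.
rewrite iter_R1b0 //; cbn [rp sval pushP].
case E: (sval (rp r)) => [|b t] /=.
  by rewrite inv1 R1.
rewrite (fv_push k.+1 (isT : b :: t != [::])) RK.
by rewrite -Hs Rst_eq.
Qed.

Definition J (g : F2) (o : Om) : Om :=
  let (n, r) := o in if basecond n r then (n, setC (R g (rc r)) r) else (n, r).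

Lemma J_one o : J one o = o.
Proof. by case: o => n r /=; case: ifP => // _; rewrite R1 setC_id. Qed.

Lemma J_mul u v o : J (mul u v) o = J v (J u o).
Proof.
case: o => n r; rewrite /J /basecond /=; case: ifP => Hb /=; rewrite ?Hb //.
by rewrite RM.
Qed.

Lemma gen_sub S : subgroup (gen S).
Proof.
split.
- by move=> H [H1 _ _] _.
- move=> u v Hu Hv H HH HS; case: (HH) => _ Hm _; apply: Hm.
    exact: (Hu H HH HS).
  exact: (Hv H HH HS).
- move=> u Hu H HH HS; case: (HH) => _ _ Hi; apply: Hi.
  exact: (Hu H HH HS).
Qed.

Lemma gen_base (S : F2 -> Prop) s : S s -> gen S s.
Proof. by move=> Hs H _ HS; apply: HS. Qed.

Lemma ncl_sub K M : subgroup (ncl K M).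
Proof.
split.
- by move=> H [H1 _ _].
- move=> u v Hu Hv H HH HK HM HC; case: (HH) => _ Hm _; apply: Hm.
    exact: (Hu H HH HK HM HC).
  exact: (Hv H HH HK HM HC).
- move=> u Hu H HH HK HM HC; case: (HH) => _ _ Hi; apply: Hi.
  exact: (Hu H HH HK HM HC).
Qed.

Lemma ncl_base K (M : F2 -> Prop) n : M n -> ncl K M n.
Proof. by move=> Hn H _ _ HM _; apply: HM. Qed.

Lemma ncl_conj K M h k : K k -> ncl K M h -> ncl K M (conj h k).
Proof. by move=> Hk Hh H HH HK HM HC; apply: (HC) => //; apply: (Hh H HH HK HM HC). Qed.

Lemma act_a_J i o : (0 < i)%N -> act (a_elt i) o = J (a_elt i) o.
Proof.
case: o => n r Hi; rewrite act_a chain_val //=.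
by case: ifP.
Qed.

Lemma Fbar_J g : Fbar g -> forall o, act g o = J g o.
Proof.
move=> Hg; apply: (Hg (fun g => forall o, act g o = J g o)).
- split.
  + by move=> o; rewrite act_one J_one.
  + by move=> u v Hu Hv o; rewrite act_mul J_mul Hu Hv.
  + move=> u Hu o.
    have E : act u (J (inv u) o) = o by rewrite Hu -J_mul mulVg J_one.
    by rewrite -{1}E act_invK.
- by move=> s [i [Hi ->]] o; apply: act_a_J.
Qed.

Section Main.
Variable N : F2 -> Prop.
Hypothesis NF : forall g, N g -> Fbar g.

Definition nbar := ncl Fbar N.
Definition coset (p : F2) : F2 -> Prop := fun z => nbar (mul z (inv p)).
Definition good (o : Om) := exists p, Fbar p /\ rc o.2 = coset p.

Lemma R_coset q p : R q (coset p) = coset (mul p q).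
Proof.
by apply: functional_extensionality => z; rewrite /R /coset inv_mul mulA.
Qed.

Lemma Fbar_mul u v : Fbar u -> Fbar v -> Fbar (mul u v).
Proof. by case: (gen_sub (fun g => exists i, 0 < i /\ g = a_elt i)) => _ H _; apply: H. Qed.
Lemma Fbar_inv u : Fbar u -> Fbar (inv u).
Proof. by case: (gen_sub (fun g => exists i, 0 < i /\ g = a_elt i)) => _ _ H; apply: H. Qed.
Lemma Fbar_one : Fbar one.
Proof. by case: (gen_sub (fun g => exists i, 0 < i /\ g = a_elt i)). Qed.

Lemma fval_Fbar s p : Fbar (fval s p).
Proof.
rewrite /fval; case: ifP => _; last exact: Fbar_one.
case: (sval p) => [|b t] /=; first exact: Fbar_one.
case: ifP => [/andP[_ H]|_]; last exact: Fbar_one.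
by apply: gen_base; exists (last b t).1.
Qed.

Lemma Bf_good n r : (exists p, Fbar p /\ rc r = coset p) ->
  (exists p, Fbar p /\ rc (Bf n r) = coset p).
Proof.
move=> [p [Hp Hc]].
rewrite /Bf; case: ifP => _.
  exists (mul p (fval (rs r) (rp r))); split; first by apply: Fbar_mul => //; apply: fval_Fbar.
  by rewrite /= Hc R_coset.
case: ifP => _; first by exists p.
case: ifP => _; last by exists p.
by case: ifP => _; exists p.
Qed.

Lemma Bb_good n r : (exists p, Fbar p /\ rc r = coset p) ->
  (exists p, Fbar p /\ rc (Bb n r) = coset p).
Proof.
move=> [p [Hp Hc]].
rewrite /Bb; case: ifP => _.
  exists (mul p (inv (fval (rs r) (rp r)))); split.
    by apply: Fbar_mul => //; apply: Fbar_inv; apply: fval_Fbar.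
  by rewrite /= Hc R_coset.
case: ifP => _; first by exists p.
case: ifP => _; last by exists p.
by case: ifP => _; exists p.
Qed.

Lemma act_good g o : good o -> good (act g o).
Proof.
rewrite /act; elim: (sval g) o => //= l w IH [n r] Ho; apply: IH.
case: l => [[] []] /=; rewrite /good /= in Ho *; by [apply: Bf_good | apply: Bb_good |].
Qed.

Definition Sfix (g : F2) := forall o, good o -> act g o = o.

Lemma nbar_sub : subgroup nbar. Proof. exact: ncl_sub. Qed.

Lemma coset_N p n : Fbar p -> N n -> coset (mul p n) = coset p.
Proof.
move=> Hp Hn; apply: functional_extensionality => z.
case: nbar_sub => H1 Hm Hi.
have Hc : nbar (conj (inv n) (inv p)).
  apply: ncl_conj; first exact: Fbar_inv.
  by apply: Hi; apply: ncl_base.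
have E : mul z (inv (mul p n)) = mul (mul z (inv p)) (conj (inv n) (inv p)).
  by rewrite /conj invK inv_mul !mulA mulKg.
apply: propositional_extensionality; rewrite /coset E; split => H.
  by rewrite -(mulgK (conj (inv n) (inv p)) (mul z (inv p))); apply: Hm => //; apply: Hi.
by apply: Hm.
Qed.

Lemma Sfix_ncl g : ncl F2all N g -> Sfix g.
Proof.
move=> Hg; apply: Hg => //.
- split.
  + by move=> o _; rewrite act_one.
  + by move=> u v Hu Hv o Ho; rewrite act_mul Hu // Hv.
  + move=> u Hu o Ho.
    by rewrite -(Hu _ (act_good (inv u) Ho)) act_Kinv.
- move=> n Hn [m r] [p [Hp Hc]].
  rewrite Fbar_J; last exact: NF.
  rewrite /=; case: ifP => // _.
  by rewrite /= Hc R_coset coset_N // -Hc setC_id.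
- move=> k h _ Hh o Ho.
  rewrite act_conj Hh ?act_Kinv //.
  exact: act_good.
Qed.

End Main.

Theorem lemma3p1 (N : F2 -> Prop) :
  subgroup N -> (forall g, N g -> Fbar g) ->
  forall g, (Fbar g /\ ncl F2all N g) <-> ncl Fbar N g.
Proof.
move=> HN NF g; split.
  move=> [Hg Hn].
  set o0 : Om := (0%Z, MkR (coset N one) 0%Z (exist _ [::] isT)).
  have Hgood : good N o0 by exists one; split => //; exact: Fbar_one.
  have := Sfix_ncl NF Hn Hgood.
  rewrite Fbar_J // /= => E.
  have E2 : R g (coset N one) = coset N one by case: E.
  have E3 := f_equal (fun C => C one) E2.
  rewrite /= /R /coset inv1 !mulg1 mul1g in E3.
  case: (nbar_sub N) => H1 _ Hi.
  have : nbar N (inv g) by rewrite E3.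
  by move/Hi; rewrite invK.
move=> Hg.
apply: (Hg (fun g => Fbar g /\ ncl F2all N g)).
- case: (ncl_sub F2all N) => H1 Hm Hi; split.
  + by split => //; exact: Fbar_one.
  + by move=> u v [? ?] [? ?]; split; [apply: Fbar_mul | apply: Hm].
  + by move=> u [? ?]; split; [apply: Fbar_inv | apply: Hi].
- by move=> h [].
- by move=> n Hn; split; [apply: NF | apply: ncl_base].
- move=> k h Hk [Hh Hh']; split.
    by rewrite /conj; apply: Fbar_mul; [apply: Fbar_inv | apply: Fbar_mul].
  by apply: ncl_conj.
Qed.
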